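(* Let $k\ge 2$ be an integer, let $\lambda>0$, and let $Y_{k,\lambda}$ be a random variable having the Poisson distribution of order $k$ with parameter $\lambda$. Let $\nu$ be an integer with $0\le \nu\le k$. Then $P(Y_{k,\lambda}\le \nu)=\tfrac12$ if and only if $$\frac{e^{k\lambda}}{2}=\sum_{j=0}^{\nu}\binom{\nu}{j}\frac{\lambda^j}{j!}.$$
   Context: The Poisson distribution of order $k$ with parameter $\lambda>0$ (for an integer $k\ge1$) is the distribution on $\{0,1,2,\dots\}$ with probability generating function $E[x^{Y_{k,\lambda}}]=\exp\bigl(-k\lambda\bigr)\exp\bigl(\lambda\sum_{i=1}^{k}x^i\bigr)$, i.e. the compound Poisson distribution with pgf $\exp\bigl(-\sum_i a_i\bigr)\exp\bigl(\sum_i a_i x^i\bigr)$ where $a_1=\dots=a_k=\lambda$ and all other $a_i=0$. Equivalently, its probability mass function $p_n=P(Y_{k,\lambda}=n)$ satisfies $p_0=e^{-k\lambda}$ and $p_n=e^{-k\lambda}\sum_{j=1}^{n}\binom{n-1}{j-1}\frac{\lambda^j}{j!}$ for $n=1,\dots,k$. The median is defined as the smallest integer $\nu$ with $P(Y_{k,\lambda}\le\nu)\ge\tfrac12$; the displayed equation is the equation determining the value of $\lambda$ at which $P(Y_{k,\lambda}\le\nu)=\tfrac12$. *)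

(* Defs.v *)
From HB Require Import structures.
From mathcomp Require Import all_boot all_order all_algebra.
From mathcomp Require Import reals sequences.
From mathcomp.analysis Require Import exp.
Set Implicit Arguments. Unset Strict Implicit. Unset Printing Implicit Defensive.
Import Order.TTheory GRing.Theory Num.Theory.
Local Open Scope ring_scope.

(* Probability mass function of the Poisson distribution of order k with
   parameter lam: the coefficient of x^n in
     exp(-k lam) exp(lam (x + x^2 + ... + x^k))
     = exp(-k lam) * prod_{i=1}^{k} sum_{m>=0} lam^m x^(i m) / m!.
   A term is indexed by the multiplicities (m_1,...,m_k) with
   sum_i i*m_i = n (each m_i <= n, so m ranges over 'I_n.+1; index i : 'I_k
   stands for the exponent i+1). *)
Definition poisk_pmf (R : realType) (k : nat) (lam : R) (n : nat) : R :=
  expR (- (k%:R * lam)) *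
  \sum_(m : {ffun 'I_k -> 'I_n.+1} | (\sum_(i < k) (i.+1 * m i))%N == n)
     \prod_(i < k) (lam ^+ m i / (m i)`!%:R).

Definition poisk_cdf (R : realType) (k : nat) (lam : R) (nu : nat) : R :=
  \sum_(n < nu.+1) poisk_pmf k lam n.

(* Main.v *)
Require Import Defs.
From HB Require Import structures.
From mathcomp Require Import all_boot all_order all_algebra.
From mathcomp Require Import reals sequences.
From mathcomp.analysis Require Import exp.
From mathcomp Require Import ring.
Import Order.TTheory GRing.Theory Num.Theory.
Local Open Scope ring_scope.
Set Implicit Arguments. Unset Strict Implicit. Unset Printing Implicit Defensive.


Definition cc (R : realType) (lam : R) (t : nat) : R := lam ^+ t / t`!%:R.
Definition wt (k N : nat) (f : {ffun 'I_k -> 'I_N}) : nat := (\sum_(i < k) i.+1 * f i)%N.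
Definition Ei (R : realType) (lam : R) (k i : nat) : {poly R} :=
  \sum_(t < k.+1) cc lam t *: 'X^(i.+1 * t).
Definition PP (R : realType) (lam : R) (k : nat) : {poly R} := \prod_(i < k) Ei lam k i.

Lemma prod_scaleX (R : realType) (I : finType) (a : I -> R) (e : I -> nat) :
  \prod_i (a i *: 'X^(e i)) = (\prod_i a i) *: ('X^(\sum_i e i) : {poly R}).
Proof.
under eq_bigr do rewrite -mul_polyC.
by rewrite big_split /= -prodrXr -mul_polyC rmorph_prod.
Qed.

Lemma PP_coef (R : realType) (lam : R) k n :
  (PP lam k)`_n = \sum_(f : {ffun 'I_k -> 'I_k.+1} | wt f == n) \prod_(i < k) cc lam (f i).
Proof.
rewrite /PP /Ei bigA_distr_bigA /=.
under eq_bigr do rewrite prod_scaleX.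
by rewrite coef_sumMXn.
Qed.

Lemma wt_term k N (f : {ffun 'I_k -> 'I_N}) (i : 'I_k) : (f i <= wt f)%N.
Proof.
rewrite /wt (bigD1 i) //= (leq_trans _ (leq_addr _ _)) //.
by rewrite mulSn leq_addr.
Qed.

Lemma orig_eq (R : realType) (lam : R) k n : (n <= k)%N ->
  \sum_(m : {ffun 'I_k -> 'I_n.+1} | (\sum_(i < k) (i.+1 * m i))%N == n)
     \prod_(i < k) (lam ^+ m i / (m i)`!%:R) = (PP lam k)`_n.
Proof.
move=> nk; rewrite PP_coef.
have H : (n.+1 <= k.+1)%N by [].
pose h (f : {ffun 'I_k -> 'I_n.+1}) : {ffun 'I_k -> 'I_k.+1} := [ffun i => widen_ord H (f i)].
pose h' (g : {ffun 'I_k -> 'I_k.+1}) : {ffun 'I_k -> 'I_n.+1} := [ffun i => inord (g i)].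
rewrite (reindex_onto h h') /=; last first.
  move=> g /eqP gw; apply/ffunP => i; rewrite !ffunE; apply/val_inj => /=.
  by rewrite inordK // ltnS -gw wt_term.
apply: eq_big => [f|f _].
  have -> : h' (h f) == f.
    by apply/eqP/ffunP => i; rewrite !ffunE; apply/val_inj => /=; rewrite inord_val.
  by rewrite andbT /wt; congr (_ == _); apply: eq_bigr => i _; rewrite ffunE.
by apply: eq_bigr => i _; rewrite ffunE.
Qed.


Definition low (R : realType) (d : nat) (q : {poly R}) := forall j, (j < d)%N -> q`_j = 0.

Lemma low_mulr (R : realType) d (p q : {poly R}) : low d p -> low d (p * q).
Proof.
move=> hp j jd; rewrite coefM big1 // => i _; rewrite hp ?mul0r //.
exact: leq_trans (ltn_ord i) jd.
Qed.

Lemma low_mull (R : realType) d (p q : {poly R}) : low d q -> low d (p * q).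
Proof. by move=> hq; rewrite mulrC; apply: low_mulr. Qed.

Lemma low_add (R : realType) d (p q : {poly R}) : low d p -> low d q -> low d (p + q).
Proof. by move=> hp hq j jd; rewrite coefD hp ?hq ?addr0. Qed.

Lemma deriv_prod (R : realType) (I : Type) (s : seq I) (F G H : I -> {poly R}) d :
  (forall i, 'X * (F i)^`() = G i * F i + H i) -> (forall i, low d (H i)) ->
  exists2 H', low d H' & 'X * (\prod_(i <- s) F i)^`() = (\sum_(i <- s) G i) * \prod_(i <- s) F i + H'.
Proof.
move=> hF hH; elim: s => [|a s [H' lH' IH]].
  exists 0; first by move=> j _; rewrite coef0.
  by rewrite !big_nil -polyC1 derivC mulr0 mul0r addr0.
exists (H a * \prod_(i <- s) F i + F a * H').
  by apply: low_add; [apply: low_mulr | apply: low_mull].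
rewrite !big_cons derivM mulrDr mulrA hF mulrCA IH; ring.
Qed.

Lemma XderivE (R : realType) (lam : R) k i :
  'X * (Ei lam k i)^`() = (((i.+1)%:R * lam) *: 'X^(i.+1)) * Ei lam k i
     - (cc lam k.+1 * (i.+1 * k.+1)%:R) *: 'X^(i.+1 * k.+1).
Proof.
pose g (t : nat) : {poly R} := (cc lam t * (i.+1 * t)%:R) *: 'X^(i.+1 * t).
have A : 'X * (Ei lam k i)^`() = \sum_(t < k.+1) g t.
  rewrite /Ei raddf_sum mulr_sumr; apply: eq_bigr => t _ /=.
  rewrite derivZ derivXn /g -scalerAr mulrnAr mulr1 -scalerMnl scalerMnr.
  case E: (i.+1 * t)%N => [|m]; first by rewrite !mulr0n mulr0.
  by rewrite mulrnAr -exprS.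
have B : (((i.+1)%:R * lam) *: 'X^(i.+1)) * Ei lam k i = \sum_(t < k.+1) g t.+1.
  rewrite /Ei mulr_sumr; apply: eq_bigr => t _.
  rewrite /g -scalerAr -scalerAl scalerA -exprD -mulnS; congr (_ *: _).
  rewrite /cc factS !natrM exprS.
  have h1 : (t`!%:R : R) != 0 by rewrite pnatr_eq0 -lt0n fact_gt0.
  have h2 : ((t.+1)%:R : R) != 0 by rewrite pnatr_eq0.
  by field; rewrite h1 nat1r h2.
have C1 : \sum_(t < k.+2) g t = g 0%N + \sum_(t < k.+1) g t.+1 := big_ord_recl _ _.
have C2 : \sum_(t < k.+2) g t = \sum_(t < k.+1) g t + g k.+1 := big_ord_recr _ _.
have C : \sum_(t < k.+1) g t.+1 = \sum_(t < k.+1) g t + g k.+1.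
  by rewrite -C2 C1 /g muln0 mulr0 scale0r add0r.
by rewrite A B C addrK.
Qed.

Lemma coefG (R : realType) (lam : R) k m : (m <= k)%N ->
  (\sum_(i < k) ((i.+1)%:R * lam) *: ('X^(i.+1) : {poly R}))`_m = m%:R * lam.
Proof.
rewrite coef_sumMXn; case: m => [|m] mk.
  by rewrite big1 ?mul0r.
by rewrite (big_pred1 (Ordinal mk)) // => i /=.
Qed.

Lemma PP_rec (R : realType) (lam : R) k n : (n <= k)%N ->
  n%:R * (PP lam k)`_n = lam * \sum_(j < n) (n - j)%:R * (PP lam k)`_j.
Proof.
move=> nk.
have hl : forall i : 'I_k, low (k.+1) (-((cc lam k.+1 * (i.+1 * k.+1)%:R) *: 'X^(i.+1 * k.+1))).
  move=> i j jd; rewrite coefN coefZ coefXn.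
  rewrite (_ : (j == _) = false) ?mulr0 ?oppr0 //; apply/negbTE.
  by rewrite neq_ltn (leq_trans jd) // leq_pmull.
have [H' lH' E] := deriv_prod (index_enum 'I_k) (F := fun i : 'I_k => Ei lam k i)
  (G := fun i : 'I_k => ((i.+1)%:R * lam) *: 'X^(i.+1))
  (fun i => XderivE lam k i) hl.
have := congr1 (fun p : {poly R} => p`_n) E.
rewrite coefXM coef_deriv coefD lH' ?ltnS // addr0 coefMr -/(PP lam k).
rewrite big_ord_recr /= subnn coefG // mulr0n !mul0r addr0 => h.
have hj : forall j : 'I_n, (n - j <= k)%N by move=> j; exact: leq_trans (leq_subr _ _) nk.
rewrite (eq_bigr (fun j : 'I_n => ((n - j)%:R * lam) * (PP lam k)`_j)) in h; last first.
  by move=> j _; rewrite coefG ?hj.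
rewrite mulr_sumr.
case: n nk hj h => [|n] nk hj /=; first by move=> _; rewrite !big_ord0 mul0r.
move=> h; rewrite mulrC mulr_natr h; apply: eq_bigr => j _ /=; ring.
Qed.


Lemma PP0 (R : realType) (lam : R) k : (PP lam k)`_0 = 1.
Proof.
rewrite /PP coef0_prod big1 // => i _; rewrite /Ei coef_sumMXn.
rewrite (big_pred1 ord0) => [|t /=]; last by rewrite muln_eq0.
by rewrite /cc expr0 fact0 divr1.
Qed.

Lemma hockey m j : (\sum_(i < m.+1) 'C(i, j) = 'C(m.+1, j.+1))%N.
Proof.
elim: m => [|m IH].
  by rewrite big_ord1; case: j => [|j] //; rewrite !bin_small.
by rewrite big_ord_recr IH [in RHS]binS.
Qed.
Lemma vander m j : (\sum_(i < m) (m - i) * 'C(i, j) = 'C(m.+1, j.+2))%N.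
Proof.
elim: m => [|m IH]; first by rewrite big_ord0 bin_small.
rewrite (eq_bigr (fun i : 'I_m.+1 => (m - i) * 'C(i, j) + 'C(i, j))%N); last first.
  by move=> i _; rewrite subSn; [rewrite mulSn addnC | exact: ltn_ord i].
by rewrite big_split /= hockey big_ord_recr /= subnn mul0n addn0 IH [in RHS]binS.
Qed.

Definition dd (R : realType) (lam : R) (n : nat) : R :=
  if n is m.+1 then \sum_(j < m.+1) 'C(m, j)%:R * cc lam j.+1 else 1.

Lemma ccS (R : realType) (lam : R) t : (t.+1)%:R * cc lam t.+1 = lam * cc lam t.
Proof.
rewrite /cc factS natrM exprS.
have h1 : (t`!%:R : R) != 0 by rewrite pnatr_eq0 -lt0n fact_gt0.
have h2 : ((t.+1)%:R : R) != 0 by rewrite pnatr_eq0.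
by field; rewrite h1 nat1r h2.
Qed.

Lemma dd_ext (R : realType) (lam : R) m (i : 'I_m) :
  dd lam i.+1 = \sum_(j < m) 'C(i, j)%:R * cc lam j.+1.
Proof.
rewrite /= (big_ord_widen m (fun j => 'C(i, j)%:R * cc lam j.+1)) ?ltn_ord //.
rewrite [RHS](bigID (fun j : 'I_m => (j < i.+1)%N)) /= [X in _ + X]big1 ?addr0 //.
by move=> j; rewrite -leqNgt => h; rewrite bin_small // mul0r.
Qed.

Lemma dd_rec (R : realType) (lam : R) n :
  n%:R * dd lam n = lam * \sum_(j < n) (n - j)%:R * dd lam j.
Proof.
case: n => [|m]; first by rewrite mul0r big_ord0 mulr0.
rewrite big_ord_recl subn0 (_ : dd lam (@ord0 m) = 1) // mulr1.
under eq_bigr => i _ do rewrite lift0 subSS dd_ext mulr_sumr.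
rewrite exchange_big /=.
have ev : forall j : 'I_m, \sum_(i < m) (m - i)%:R * ('C(i, j)%:R * cc lam j.+1) = 'C(m.+1, j.+2)%:R * cc lam j.+1.
  move=> j; rewrite -vander natr_sum mulr_suml; apply: eq_bigr => i _.
  by rewrite natrM mulrA.
rewrite (eq_bigr _ (fun j _ => ev j)).
rewrite big_ord_recl bin0 mul1r !mulrDr; congr (_ + _).
  by rewrite /cc expr1 (_ : 1`! = 1)%N // divr1 mulrC.
rewrite !mulr_sumr; apply: eq_bigr => j _.
rewrite lift0 [RHS]mulrCA -ccS mulrA -natrM mul_bin_diag natrM; ring.
Qed.

Lemma dd_cum (R : realType) (lam : R) nu :
  \sum_(n < nu.+1) dd lam n = \sum_(j < nu.+1) 'C(nu, j)%:R * cc lam j.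
Proof.
elim: nu => [|nu IH].
  by rewrite !big_ord_recr !big_ord0 /= /cc expr0 fact0 !add0r mul1r divr1.
rewrite big_ord_recr IH /= [in RHS]big_ord_recl [in LHS]big_ord_recl.
rewrite !bin0 -addrA; congr (_ + _).
rewrite [in RHS](eq_bigr (fun j : 'I_nu.+1 => 'C(nu, j.+1)%:R * cc lam j.+1 + 'C(nu, j)%:R * cc lam j.+1)); last first.
  by move=> j _; rewrite lift0 binS natrD mulrDl.
rewrite big_split /=; congr (_ + _).
by rewrite [in RHS]big_ord_recr /= bin_small // mul0r addr0.
Qed.

Lemma PP_dd (R : realType) (lam : R) k n : (n <= k)%N -> (PP lam k)`_n = dd lam n.
Proof.
elim/ltn_ind: n => -[|m] IH mk; first by rewrite PP0.
have h1 := PP_rec lam mk; have h2 := dd_rec lam m.+1.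
have e : \sum_(j < m.+1) (m.+1 - j)%:R * (PP lam k)`_j = \sum_(j < m.+1) (m.+1 - j)%:R * dd lam j.
  by apply: eq_bigr => j _; rewrite IH //; exact: leq_trans (ltnW (ltn_ord j)) mk.
rewrite e -h2 in h1.
apply: (mulfI _ h1); by rewrite pnatr_eq0.
Qed.


Unset Implicit Arguments.

Theorem mainTheorem1 (R : realType) (k : nat) (lam : R) (nu : nat) :
  (2 <= k)%N -> 0 < lam -> (nu <= k)%N ->
  (poisk_cdf k lam nu = 2^-1 <->
   expR (k%:R * lam) / 2 =
   \sum_(j < nu.+1) 'C(nu, j)%:R * (lam ^+ j / j`!%:R)).
Proof.
move=> _ _ nuk.
have Hc : poisk_cdf k lam nu = (expR (k%:R * lam))^-1 *
    \sum_(j < nu.+1) 'C(nu, j)%:R * (lam ^+ j / j`!%:R).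
  rewrite /poisk_cdf /poisk_pmf -mulr_sumr -expRN; congr (_ * _).
  rewrite -(dd_cum lam nu); apply: eq_bigr => n _.
  by rewrite orig_eq ?PP_dd // (leq_trans _ nuk) // -ltnS ltn_ord.
have e0 : expR (k%:R * lam) != 0 by rewrite gt_eqF ?expR_gt0.
rewrite Hc; split => h.
  apply: (mulfI (invr_neq0 e0)); rewrite h; field; exact: e0.
rewrite -h; field; exact: e0.
Qed.
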